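(* Let $(\vec X_1,Y_1),\ldots,(\vec X_n,Y_n)$ be i.i.d. with $\vec X\in\mathcal X$, $Y\in\mathbb R$, and let $F(y\mid\vec x)$ be the conditional distribution function of $Y$ given $\vec X=\vec x$. For each $n$ let $\widehat F$ be an estimate of $F$ independent of $(\vec X_i,Y_i)_{i\le n}$, and suppose there exist sequences $\eta_n=o(1)$ and $\rho_n=o(1)$ such that $\mathbb P\Big(\mathbb E\big[\sup_{y\in\mathbb R}(\widehat F(y\mid\vec X)-F(y\mid\vec X))^2\,\big|\,\widehat F\big]\ge\eta_n\Big)\le\rho_n$, where $(\vec X,Y)$ is an independent copy. Let $I_1=\{i\le n: |\widehat F(Y_i\mid\vec X_i)-F(Y_i\mid\vec X_i)|<\eta_n^{1/3}\}$ and $I_2=\{1,\ldots,n\}\setminus I_1$. Then $|I_2|=o_{\mathbb P}(n)$ and $|I_1|=n+o_{\mathbb P}(n)$. *)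

(* Defs.v *)
From HB Require Import structures.
From mathcomp Require Import all_boot all_order all_algebra.
From mathcomp Require Import all_classical all_reals all_analysis.
From mathcomp Require Import measurable_realfun.
Set Implicit Arguments. Unset Strict Implicit. Unset Printing Implicit Defensive.
Import Order.TTheory GRing.Theory Num.Theory.
Local Open Scope classical_set_scope.
Local Open Scope ring_scope.

Section Defs.
Context {d dU : measure_display} {Omega : measurableType d} {R : realType}
  {U : measurableType dU}.

Definition iid_seq (P : probability Omega R) (V : nat -> Omega -> U) : Prop :=
  (forall i, measurable_fun setT (V i)) /\
  (forall i (B : set U), measurable B -> P (V i @^-1` B) = P (V 0%N @^-1` B)) /\
  (forall (n : nat) (B : nat -> set U), (forall i, measurable (B i)) ->
     P (\bigcap_(i < n) (V i @^-1` B i)) =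
     (\prod_(i < n) fine (P (V i @^-1` B i)))%:E).

Definition indep_prefix {dT} {T : measurableType dT} (P : probability Omega R)
  (Z : Omega -> T) (V : nat -> Omega -> U) (n : nat) : Prop :=
  forall (A : set T) (B : nat -> set U), measurable A ->
    (forall i, measurable (B i)) ->
    P (Z @^-1` A `&` \bigcap_(i < n) (V i @^-1` B i)) =
    (fine (P (Z @^-1` A)) * fine (P (\bigcap_(i < n) (V i @^-1` B i))))%:E.
End Defs.

(* F is (a version of) the conditional distribution function of Y given X:
   P(X in A, Y <= y) = E[1_{X in A} F(y | X)] *)
Definition cond_cdf {d dX} {Omega : measurableType d} {R : realType}
  {Xs : measurableType dX} (P : probability Omega R)
  (X : Omega -> Xs) (Y : Omega -> R) (F : R -> Xs -> R) : Prop :=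
  forall (y : R) (A : set Xs), measurable A ->
    P (X @^-1` A `&` [set w | Y w <= y]) =
    (\int[P]_(w in X @^-1` A) (F y (X w))%:E)%E.

Definition sup_sqdiff {Xs : Type} {R : realType} (G F : R -> Xs -> R) (x : Xs)
  : \bar R :=
  ereal_sup (range (fun y : R => ((G y x - F y x) ^+ 2)%:E)).

(* Main.v *)
Require Import Defs.
From HB Require Import structures.
From mathcomp Require Import all_boot all_order all_algebra.
From mathcomp Require Import all_classical all_reals all_analysis.
From mathcomp Require Import measurable_realfun.
Import Order.TTheory GRing.Theory Num.Theory.
Local Open Scope classical_set_scope.
Local Open Scope ring_scope.
Definition mkMF {d d'} {T : measurableType d} {T' : measurableType d'} {f : T -> T'}
  (mf : measurable_fun setT f) : {mfun T >-> T'} :=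
  HB.pack f (isMeasurableFun.Build _ _ _ _ f mf).

Lemma key_prod d dT dU (Omega : measurableType d) (R : realType) (P : probability Omega R)
  (T : measurableType dT) (U : measurableType dU) (Zf : Omega -> T) (W : Omega -> U)
  (mZ : measurable_fun setT Zf) (mW : measurable_fun setT W) :
  (forall A B, measurable A -> measurable B ->
     P (Zf @^-1` A `&` W @^-1` B) = (fine (P (Zf@^-1` A)) * fine (P (W @^-1` B)))%:E) ->
  forall S : set (T * U), measurable S ->
  P ((fun w => (Zf w, W w)) @^-1` S) =
  (\int[distribution P (mkMF mZ)]_z P (W @^-1` xsection S z))%E.
Proof.
move=> ind S mS.
have mJ : measurable_fun setT (fun w => (Zf w, W w)) by exact: measurable_fun_pair.
pose m1 := distribution P (mkMF mZ).
pose m2 := distribution P (mkMF mW).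
pose mu := distribution P (mkMF mJ).
have pu : forall X, measurable X -> ((m1 \x m2) X = mu X)%E.
  apply: product_measure_unique => A B mA mB.

change (P ((fun w => (Zf w, W w)) @^-1` (A `*` B)) = (P (Zf @^-1` A) * P (W @^-1` B))%E).
rewrite (_ : _ @^-1` _ = Zf @^-1` A `&` W @^-1` B) //.
have mZA : measurable (Zf @^-1` A) by rewrite -[X in measurable X]setTI; exact (mZ measurableT A mA).
have mWB : measurable (W @^-1` B) by rewrite -[X in measurable X]setTI; exact (mW measurableT B mB).
by rewrite ind // EFinM !fineK // fin_num_measure.
transitivity ((m1 \x m2) S)%E; first by rewrite pu.
by [].
Qed.
Arguments key_prod {d dT dU Omega R P T U Zf W}.

Lemma cube_powR (R : realType) (eta : R) : 0 <= eta ->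
  (powR eta 3^-1) ^+ 2 * powR eta 3^-1 = eta.
Proof.
move=> e0; rewrite -exprSr -powR_mulrn ?powR_ge0 // -powRrM mulVf ?powRr1 //.
Qed.
Arguments cube_powR {R eta}.


Lemma one_bound d dT dU dX (Omega : measurableType d) (R : realType)
  (P : probability Omega R) (T : measurableType dT) (U : measurableType dU)
  (Xs : measurableType dX)
  (Zf : Omega -> T) (V V0 : Omega -> U) (pr : U -> Xs)
  (mpr : measurable_fun setT pr)
  (mZ : measurable_fun setT Zf) (mV : measurable_fun setT V)
  (mV0 : measurable_fun setT V0) :
  (forall B, measurable B -> P (V @^-1` B) = P (V0 @^-1` B)) ->
  (forall A B, measurable A -> measurable B ->
     P (Zf @^-1` A `&` V @^-1` B) = (fine (P (Zf@^-1` A)) * fine (P (V @^-1` B)))%:E) ->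
  forall (D : T * U -> R) (mD : measurable_fun setT D)
  (Sf : T * Xs -> \bar R) (mSf : measurable_fun setT Sf),
  (forall p, (0 <= Sf p)%E) ->
  (forall z u, ((D (z,u))^+2)%:E <= Sf (z, pr u))%E ->
  forall eta : R, 0 < eta ->
  (P [set w | (powR eta 3^-1 <= D (Zf w, V w))%R] <=
   (powR eta 3^-1)%:E + P [set w | eta%:E <= \int[P]_v Sf (Zf w, pr (V0 v))])%E.
Proof.
move=> idd ind D mD Sf mSf Sf0 hDS eta eta0.
set c := powR eta 3^-1.
have c0 : 0 < c by apply: powR_gt0.
pose S := [set p | c <= D p].
have mS : measurable S.
  have := measurable_fun_ler (measurable_cst c) mD measurableT (Y := [set true]) I.
  by rewrite setTI.
have -> : [set w | c <= D (Zf w, V w)] = (fun w => (Zf w, V w)) @^-1` S by [].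
rewrite (key_prod mZ mV ind _ mS).
pose g := fubini_F P (fun p : T * Omega => Sf (p.1, pr (V0 p.2))).
have mg : measurable_fun setT g.
  apply: measurable_fun_fubini_tonelli_F => //.
  apply: measurableT_comp mSf _.
  apply: measurable_fun_pair; first exact: measurable_fst.
  by apply: measurableT_comp mpr _; apply: measurableT_comp mV0 _; exact: measurable_snd.
pose bad := [set z | eta%:E <= g z]%E.
have mbad : measurable bad.
  have := measurable_lee measurableT (measurable_cst eta%:E) mg.
  by rewrite setTI.
pose m1 := distribution P (mkMF mZ).
pose m2 := distribution P (mkMF mV).
have -> : P [set w | (eta%:E <= \int[P]_v Sf (Zf w, pr (V0 v)))%E] = m1 bad by [].
have -> : (c%:E + m1 bad = \int[m1]_z (c%:E + (\1_bad z : R)%:E))%E.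
  have h1 : forall z, (0 <= (\1_bad z : R)%:E)%E by move=> z; rewrite lee_fin indicE.
  have h2 : measurable_fun setT (fun z => (\1_bad z : R)%:E : \bar R).
    by apply/measurable_EFinP; exact: measurable_indic.
  have h3 : forall z : T, setT z -> (0 <= c%:E)%E by move=> z _; rewrite lee_fin; exact: ltW.
  rewrite ge0_integralD //.
  rewrite integral_cst // integral_indic // setIT.
  have m1T : m1 setT = 1%E.
    by rewrite /m1 /= /distribution /pushforward /= preimage_setT probability_setT.
  congr (_ + _)%E; rewrite -[LHS]mule1; congr (_ * _)%E; exact/esym.
apply: ge0_le_integral => //.
- exact: (measurable_fun_xsection m2 mS).
- apply: emeasurable_funD; first exact: measurable_cst.
  by apply/measurable_EFinP; exact: measurable_indic.
move=> z _.
change (P (V @^-1` xsection S z) <= c%:E + (\1_bad z : R)%:E)%E.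
have mVx : measurable (V @^-1` xsection S z).
  by rewrite -[X in measurable X]setTI; exact: (mV measurableT _ (measurable_xsection z mS)).
rewrite indicE.
have [bz|nbz] := pselect (bad z).
  rewrite mem_set // (le_trans (probability_le1 P mVx)) // -EFinD lee_fin.
  rewrite lerDr.
  exact: ltW.
rewrite memNset // addr0.
pose B := [set u | ((c^+2)%:E <= Sf (z, pr u))%E].
have mB : measurable B.
  have := measurable_lee measurableT (measurable_cst (c^+2)%:E)
    (measurableT_comp mSf (measurable_fun_pair (measurable_cst z) mpr)).
  by rewrite setTI.
have mVB : measurable (V @^-1` B).
  by rewrite -[X in measurable X]setTI; exact: (mV measurableT _ mB).
have mV0B : measurable (V0 @^-1` B).
  by rewrite -[X in measurable X]setTI; exact: (mV0 measurableT _ mB).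
apply: (@le_trans _ _ (P (V @^-1` B))).
  apply: le_measure; rewrite ?inE //.
  move=> v /= Hv.
  have cD : c <= D (z, V v) by move: Hv; rewrite /xsection /= inE.
  apply: le_trans (hDS z (V v)); rewrite lee_fin !expr2.
  by apply: ler_pM => //; exact: ltW.
rewrite idd //.
have mg' : measurable_fun setT (fun v => Sf (z, pr (V0 v))).
  apply: measurableT_comp mSf _.
  apply: measurable_fun_pair; first exact: measurable_cst.
  exact: measurableT_comp mpr mV0.
have := @le_integral_comp_abse _ _ _ P setT measurableT (fun v => Sf (z, pr (V0 v)))
  (c^+2) id (@measurable_id _ _ setT) (fun _ h => h) (fun _ _ _ _ h => h) mg' (exprn_gt0 2 c0).
rewrite setTI (_ : [set x | _] = V0 @^-1` B); last first.
  by apply/funext => v; rewrite /= gee0_abs.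
rewrite (eq_integral (fun v => Sf (z, pr (V0 v)))); last first.
  by move=> v _; rewrite gee0_abs.
move=> Hm.
have ig : (\int[P]_v Sf (z, pr (V0 v)) < eta%:E)%E.
  by rewrite ltNge; apply/negP.
have fp : P (V0 @^-1` B) = (fine (P (V0 @^-1` B)))%:E by rewrite fineK // fin_num_measure.
have H := le_lt_trans Hm ig.
have H' : ((c^+2)%:E * (fine (P (V0 @^-1` B)))%:E < eta%:E)%E by rewrite -fp; exact: H.
move: H'; rewrite -EFinM lte_fin -(cube_powR (ltW eta0)) -/c ltr_pM2l ?exprn_gt0 // => H'.
by rewrite fp lee_fin ltW.
Qed.

Arguments one_bound {d dT dU dX Omega R P T U Xs Zf V V0 pr}.

Lemma sum_bound d (Omega : measurableType d) (R : realType) (P : probability Omega R)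
  (n : nat) (Q : 'I_n -> Omega -> bool) :
  (forall i, measurable [set w | Q i w]) ->
  forall b : R, (forall i, (P [set w | Q i w] <= b%:E)%E) ->
  forall e : R, 0 < e -> (0 < n)%N ->
  (P [set w | (e * n%:R < (#|[set i | Q i w]%SET|)%:R)%R] <= (b / e)%:E)%E.
Proof.
move=> mQ b hb e e0 n0.
pose N w := \sum_(i < n) (\1_[set w | Q i w] w : R).
have cN : forall w, (#|[set i | Q i w]%SET|)%:R = N w.
  move=> w; rewrite -sum1_card natr_sum big_mkcond /=; apply: eq_bigr => i _.
  rewrite inE indicE; case Qi: (Q i w); [by rewrite mem_set|by rewrite memNset //= Qi].
have N0 : forall w, 0 <= N w.
  by move=> w; apply: sumr_ge0 => i _; rewrite indicE.
have mN : measurable_fun setT N.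
  by apply: measurable_sum => i; exact: measurable_indic.
have mNE : measurable_fun setT (fun w => (N w)%:E).
  exact/measurable_EFinP.
have en0 : 0 < e * n%:R by rewrite mulr_gt0 // ltr0n.
pose S' := [set w | e * n%:R <= N w].
have mS' : measurable S'.
  have := measurable_fun_ler (measurable_cst (e * n%:R)) mN measurableT (Y := [set true]) I.
  by rewrite setTI.
have mT : measurable [set w | e * n%:R < (#|[set i | Q i w]%SET|)%:R].
  have := measurable_fun_ltr (measurable_cst (e * n%:R)) mN measurableT (Y := [set true]) I.
  rewrite setTI (_ : [set w | _] = (fun w => (e * n%:R < N w)%R) @^-1` [set true]) //.
  by apply/funext => w /=; rewrite cN.
apply: (@le_trans _ _ (P S')).
  apply: le_measure; rewrite ?inE //.
  by move=> w /=; rewrite cN => /ltW.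
have := @le_integral_comp_abse _ _ _ P setT measurableT (fun w => (N w)%:E)
  (e * n%:R) id (@measurable_id _ _ setT) (fun _ h => h) (fun _ _ _ _ h => h) mNE en0.
rewrite setTI (_ : [set x | _] = S'); last first.
  by apply/funext => w /=; rewrite ger0_norm ?N0 // lee_fin.
rewrite (eq_integral (fun w => (\sum_(i < n) (\1_[set w | Q i w] w : R)%:E)%E)); last first.
  by move=> w _; rewrite gee0_abs ?lee_fin // sumEFin.
have hi1 : forall i (w : Omega), setT w -> (0 <= (\1_[set w | Q i w] w : R)%:E)%E.
  by move=> i w _; rewrite lee_fin indicE.
have hi2 : forall i, measurable_fun setT (fun w => (\1_[set w | Q i w] w : R)%:E).
  by move=> i; apply/measurable_EFinP; exact: measurable_indic.
rewrite ge0_integral_sum //.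
move=> Hm.
have Hs : (\sum_(i < n) \int[P]_x (\1_[set w | Q i w] x : R)%:E <= (n%:R * b)%:E)%E.
  rewrite (eq_bigr (fun i => P [set w | Q i w])); last first.
    by move=> i _; rewrite integral_indic // setIT.
  apply: (@le_trans _ _ (\sum_(i < n) b%:E)%E); first exact: lee_sum.
  by rewrite sumEFin lee_fin sumr_const card_ord mulr_natl.
have fp : P S' = (fine (P S'))%:E by rewrite fineK // fin_num_measure.
have H' : ((e * n%:R)%:E * (fine (P S'))%:E <= (n%:R * b)%:E)%E.
  by rewrite -fp; exact: le_trans Hm Hs.
rewrite fp lee_fin ler_pdivlMr //.
move: H'; rewrite -EFinM lee_fin mulrC mulrA [_ * b]mulrC ler_pM2r ?ltr0n //.
Qed.

Lemma lim_part (R : realType) (eta rho : nat -> R) (e : R) (u : nat -> \bar R) :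
  eta @ \oo --> 0 -> rho @ \oo --> 0 -> 0 < e ->
  (\forall n \near \oo, 0 < eta n) ->
  (forall n, (0 <= u n)%E) ->
  (forall n, 0 < eta n -> (0 < n)%N ->
     (u n <= ((powR (eta n) 3^-1 + rho n) / e)%:E)%E) ->
  u @ \oo --> 0%E.
Proof.
move=> etacvg rhocvg e0 epos u0 ub.
have hc : (fun n => powR (eta n) 3^-1) @ \oo --> 0.
  apply/cvgrPdist_lt => eps eps0.
  have e3 : 0 < eps^+3 by rewrite exprn_gt0.
  move/cvgrPdist_lt: etacvg => /(_ _ e3) Heta.
  near=> n.
  have ep : 0 < eta n by near: n; exact: epos.
  have el : `|0 - eta n| < eps^+3 by near: n; exact: Heta.
  rewrite sub0r normrN ger0_norm ?powR_ge0 //.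
  have lt : eta n < eps^+3 by move: el; rewrite sub0r normrN gtr0_norm.
  have := @gt0_ltr_powR R 3^-1 ltac:(by rewrite invr_gt0) (eta n) (eps^+3).
  rewrite !nnegrE (ltW ep) (ltW e3) => /(_ isT isT lt).
  rewrite -powR_mulrn ?(ltW eps0) // -powRrM mulfV ?powRr1 ?(ltW eps0) //.
have hu : (fun n => ((powR (eta n) 3^-1 + rho n) / e)%:E) @ \oo --> 0%:E.
  apply: cvg_EFin; first by near=> n.
  have H := @cvgMr_tmp R nat \oo _ _ _ e^-1 (cvgD hc rhocvg).
  rewrite add0r mul0r in H; exact: H.
apply: (@squeeze_cvge _ _ _ _ (fun=> 0%E) u (fun n => ((powR (eta n) 3^-1 + rho n) / e)%:E)) => //.
- near=> n; rewrite u0 /=; apply: ub.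
  + by near: n; exact: epos.
  + by near: n; exact: nbhs_infty_gt.
- exact: cvg_cst.
Unshelve. all: end_near.
Qed.

Theorem lemma1 {d dX dT : measure_display} (Omega : measurableType d)
  (R : realType) (P : probability Omega R)
  (Xs : measurableType dX) (T : measurableType dT)
  (X : nat -> Omega -> Xs) (Y : nat -> Omega -> R) (F : R -> Xs -> R)
  (Z : nat -> Omega -> T) (Ghat : nat -> T -> R -> Xs -> R)
  (eta rho : nat -> R) :
  iid_seq P (fun i w => (X i w, Y i w)) ->
  cond_cdf P (X 0%N) (Y 0%N) F ->
  measurable_fun setT (fun p : R * Xs => F p.1 p.2) ->
  (forall n, measurable_fun setT (Z n)) ->
  (forall n, indep_prefix P (Z n) (fun i w => (X i w, Y i w)) n) ->
  (forall n, measurable_fun setT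
     (fun p : T * (R * Xs) => Ghat n p.1 p.2.1 p.2.2)) ->
  (forall n, measurable_fun setT
     (fun p : T * Xs => (sup_sqdiff (Ghat n p.1) F p.2 : \bar R))) ->
  eta @ \oo --> 0 ->
  rho @ \oo --> 0 ->
  (forall n, P [set w | ((eta n)%:E <=
       \int[P]_v sup_sqdiff (Ghat n (Z n w)) F (X 0%N v))%E]
     <= (rho n)%:E)%E ->
  let I1 n w := [set i : 'I_n |
     `|Ghat n (Z n w) (Y i w) (X i w) - F (Y i w) (X i w)|
       < powR (eta n) (3^-1)]%SET in
  let I2 n w := (~: I1 n w)%SET in
  (forall e : R, 0 < e ->
     (fun n => P [set w | e * n%:R < (#|I2 n w|)%:R]) @ \oo --> 0%E) /\
  (forall e : R, 0 < e ->
     (fun n => P [set w | e * n%:R < `|(#|I1 n w|)%:R - n%:R|]) @ \oo --> 0%E).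
Proof.
move=> [mV [idd0 _]] _ mF mZ indZ mG mSf etacvg rhocvg hyp I1 I2.
pose V i := fun w => (X i w, Y i w).
have mVi : forall i, measurable_fun setT (V i) := mV.
pose D n := fun p : T * (Xs * R) => `|Ghat n p.1 p.2.2 p.2.1 - F p.2.2 p.2.1|.
have msw2 : measurable_fun setT (fun p : T * (Xs * R) => (p.2.2, p.2.1)).
  apply: measurable_fun_pair.
  - exact: measurableT_comp measurable_snd measurable_snd.
  - exact: measurableT_comp measurable_fst measurable_snd.
have msw : measurable_fun setT (fun p : T * (Xs * R) => (p.1, (p.2.2, p.2.1))).
  by apply: measurable_fun_pair; first exact: measurable_fst.
have mD : forall n, measurable_fun setT (D n).
  move=> n.
  have h1 : measurable_fun setT (fun p : T * (Xs * R) => Ghat n p.1 p.2.2 p.2.1).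
    exact: (measurableT_comp (mG n) msw).
  have h2 : measurable_fun setT (fun p : T * (Xs * R) => F p.2.2 p.2.1).
    exact: (measurableT_comp mF msw2).
  have h3 := measurableT_comp (@normr_measurable R setT) (measurable_funB h1 h2).
  exact: h3.
  
pose Sf n := fun p : T * Xs => sup_sqdiff (Ghat n p.1) F p.2.
have Sf0 : forall n p, (0 <= Sf n p)%E.
  move=> n p; apply: le_trans (ereal_sup_ubound _); last by exists 0.
  by rewrite lee_fin sqr_ge0.
have hDS : forall n z u, (((D n (z, u))^+2)%:E <= Sf n (z, u.1))%E.
  move=> n z u; rewrite /D /= real_normK; last exact: num_real.
  by apply: ereal_sup_ubound; exists u.2.
have idd : forall i B, measurable B -> P (V i @^-1` B) = P (V 0%N @^-1` B).
  by move=> i B mB; exact: idd0.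
have ind : forall n (i : 'I_n) A B, measurable A -> measurable B ->
    P (Z n @^-1` A `&` V i @^-1` B) =
    (fine (P (Z n @^-1` A)) * fine (P (V i @^-1` B)))%:E.
  move=> n i A B mA mB.
  have mBj : forall j, measurable (if j == val i then B else setT).
    by move=> j; case: ifP.
  have := indZ n A (fun j => if j == val i then B else setT) mA mBj.
  have -> : \bigcap_(j < n) ((fun i w => (X i w, Y i w)) j @^-1`
      (if j == val i then B else setT)) = V i @^-1` B.
    apply/seteqP; split => w.
      by move=> /(_ (val i) (ltn_ord i)) /=; rewrite eqxx.
    by move=> Hw j /= jn; case: ifP => [/eqP ->|_].
  by [].
have bnd : forall n, 0 < eta n -> (0 < n)%N -> forall e, 0 < e ->
    (P [set w | (e * n%:R < (#|I2 n w|)%:R)%R] <=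
     ((powR (eta n) 3^-1 + rho n) / e)%:E)%E.
  move=> n en n0 e e0.
  set c := powR (eta n) 3^-1.
  pose Q := fun (i : 'I_n) w => c <= D n (Z n w, V i w).
  have -> : [set w | e * n%:R < (#|I2 n w|)%:R] =
      [set w | (e * n%:R < (#|[set i | Q i w]%SET|)%:R)%R].
    apply/funext => w /=.
    rewrite (_ : #|I2 n w| = #|[set i | Q i w]%SET|) //.
    by apply: eq_card => i; rewrite /I2 /I1 !inE /Q /D /= leNgt.
  apply: sum_bound => //.
  - move=> i.
    have := measurable_fun_ler (measurable_cst c)
      (measurableT_comp (mD n) (measurable_fun_pair (mZ n) (mVi i))) measurableT
      (Y := [set true]) I.
    by rewrite setTI.
  - move=> i; rewrite EFinD.
    apply: le_trans (one_bound measurable_fst (mZ n) (mVi i) (mVi 0%N) (idd i)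
      (ind n i) (D n) (mD n) (Sf n) (mSf n) (Sf0 n) (hDS n) (eta n) en) _.
    by apply: leeD => //; exact: hyp n.
have epos : \forall n \near \oo, 0 < eta n.
  move/cvgrPdist_lt: rhocvg => /(_ 1 ltr01) Hr.
  near=> n.
  have rn : `|0 - rho n| < 1 by near: n; exact: Hr.
  rewrite ltNge; apply/negP => en.
  have := hyp n.
  rewrite (_ : [set w | _] = setT); last first.
    apply/funext => w; apply/propext; split => // _.
    apply: (@le_trans _ _ 0%E); first by rewrite lee_fin.
    by apply: integral_ge0 => v _; exact: (Sf0 n (Z n w, X 0%N v)).
  rewrite probability_setT lee_fin => h1.
  move: rn; rewrite sub0r normrN => /(le_lt_trans (ler_norm _)).
  by rewrite ltNge h1.
have part1 : forall e : R, 0 < e ->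
    (fun n => P [set w | e * n%:R < (#|I2 n w|)%:R]) @ \oo --> 0%E.
  move=> e e0; apply: (@lim_part R eta rho e) => //.
  by move=> n en n0; exact: bnd.
split => // e e0.
rewrite (_ : (fun n => P [set w | e * n%:R < `|(#|I1 n w|)%:R - n%:R|]) =
  (fun n => P [set w | e * n%:R < (#|I2 n w|)%:R])); first exact: part1.
apply/funext => n; congr (P _); apply/funext => w /=.
have hc : (#|I1 n w| + #|I2 n w| = n)%N.
  by rewrite /I2 /= cardsC card_ord.
have hn : (n%:R : R) = (#|I1 n w|)%:R + (#|I2 n w|)%:R by rewrite -natrD hc.
have E : `|(#|I1 n w|)%:R - n%:R| = ((#|I2 n w|)%:R : R).
  by rewrite hn opprD addrA subrr sub0r normrN ger0_norm.
by rewrite E.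
Unshelve. all: end_near.
Qed.
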